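(* Consider a gate set consisting of almost classical gates that includes CNOT and a diagonal gate $D$. Let $U=U_IU_{I-1}\cdots U_1$ with each $U_i$ from the gate set. Then, after appending ancilla qubits initialized to $|0\rangle$, $U$ can be compiled into an equivalent circuit of almost classical gates (acting as $U$ on the data qubits and returning the ancillas to $|0\rangle$) in which all gates of the form $D^k$, with $k$ an integer, lie in a single layer (i.e., act in parallel on distinct qubits).
   Context: A unitary $V$ on $n$ qubits is almost classical if $V=\sum_x e^{i\phi(x)}|f(x)\rangle\langle x|$ for some bijection $f:\{0,1\}^n\to\{0,1\}^n$ and phases $e^{i\phi(x)}\in U(1)$; i.e. it maps each computational basis state to a computational basis state times a phase (e.g. CNOT, permutation gates, diagonal phase gates). *)

(* Defs.v *)
From HB Require Import structures.
From Stdlib Require List.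
From mathcomp Require Import all_boot all_order all_algebra.
Set Implicit Arguments. Unset Strict Implicit. Unset Printing Implicit Defensive.
Import Order.TTheory GRing.Theory Num.Theory.
Local Open Scope ring_scope.

Section QC.
Variable C : numClosedFieldType.

(* computational basis states of m qubits *)
Definition bits (m : nat) := {ffun 'I_m -> bool}.

(* an operator on m qubits, given by its matrix entries  V y x = <y|V|x> *)
Definition op (m : nat) := bits m -> bits m -> C.

Definition op_eq m (A B : op m) := forall y x, A y x = B y x.

Definition almost_classical m (V : op m) :=
  exists (f : bits m -> bits m) (ph : bits m -> C),
    bijective f /\ (forall x, `|ph x| = 1) /\
    forall y x, V y x = (if y == f x then ph x else 0).

Definition diagonal m (V : op m) := forall y x, y != x -> V y x = 0.

Definition opid m : op m := fun y x => (y == x)%:R.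
Definition opmul m (A B : op m) : op m := fun y x => \sum_z A y z * B z x.
Definition adj m (V : op m) : op m := fun y x => (V x y)^*.
Definition oppow m (V : op m) (k : nat) : op m := iter k (opmul V) (@opid m).
(* integer powers (for a unitary V, adj V is its inverse) *)
Definition oppowz m (V : op m) (k : int) : op m :=
  match k with Posz k => oppow V k | Negz k => oppow (adj V) k.+1 end.

(* CNOT, control = qubit 0, target = qubit 1 *)
Definition cnot_map (x : bits 2) : bits 2 :=
  [ffun i : 'I_2 => if val i == 0%N then x ord0 else xorb (x ord0) (x ord_max)].
Definition CNOT : op 2 := fun y x => (y == cnot_map x)%:R.

(* a gate placed in an n-qubit circuit: an operator on m qubits acting on the
   qubits listed in g_qs *)
Record ginst (n : nat) := GInst { g_ar : nat; g_op : op g_ar; g_qs : g_ar.-tuple 'I_n }.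

Definition restrict n m (q : m.-tuple 'I_n) (x : bits n) : bits m :=
  [ffun j => x (tnth q j)].

Definition embed n (g : ginst n) : op n := fun y x =>
  if [forall i, (i \notin g_qs g) ==> (y i == x i)]
  then @g_op n g (restrict (g_qs g) y) (restrict (g_qs g) x) else 0.

Definition state n := bits n -> C.
Definition apply_op n (A : op n) (psi : state n) : state n :=
  fun y => \sum_x A y x * psi x.

(* circuit as a list of gates in temporal order (head = applied first):
   [U_1; ...; U_I] implements U_I ... U_1 *)
Definition run n (c : seq (ginst n)) (psi : state n) : state n :=
  foldl (fun psi g => apply_op (embed g) psi) psi c.

Definition wf_circuit n (c : seq (ginst n)) := forall g, List.In g c -> uniq (g_qs g).

Definition all_gates n (P : ginst n -> Prop) (c : seq (ginst n)) :=
  forall g, List.In g c -> P g.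

Definition in_gateset (S : forall m, op m -> Prop) n (g : ginst n) :=
  S (g_ar g) (@g_op n g).

Definition is_Dpow mD (D : op mD) n (g : ginst n) :=
  exists (e : mD = g_ar g) (k : int),
    op_eq (@g_op n g) (eq_rect mD op (oppowz D k) (g_ar g) e).

Definition allowed (S : forall m, op m -> Prop) mD (D : op mD) n (g : ginst n) :=
  in_gateset S g \/
  (exists V, S (g_ar g) V /\ op_eq (@g_op n g) (adj V)) \/
  is_Dpow D g.

Definition layer n (L : seq (ginst n)) :=
  pairwise (fun g h => all (fun i => i \notin g_qs h) (g_qs g)) L.

(* psi (x) |0...0> on n data qubits (the first n) and a ancillas *)
Definition ext n a (psi : state n) : state (n + a) := fun z =>
  if [forall j : 'I_a, ~~ z (rshift n j)]
  then psi [ffun i => z (lshift a i)] else 0.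

End QC.

(* Main.v *)
Require Import Defs.
From HB Require Import structures.
From mathcomp Require Import all_boot all_order all_algebra.
From Stdlib Require Import ClassicalEpsilon.
From mathcomp Require Import zify.
Set Implicit Arguments. Unset Strict Implicit. Unset Printing Implicit Defensive.
Import Order.TTheory GRing.Theory Num.Theory.
Local Open Scope ring_scope.

Section Gen.
Variable C : numClosedFieldType.

Definition gmap m (V : op C m) (x : bits m) : bits m := odflt x [pick y | V y x != 0].
Definition gph m (V : op C m) (x : bits m) : C := V (gmap V x) x.

Lemma ac_spec m (V : op C m) : almost_classical V ->
  exists f ph, bijective f /\ (forall x, `|ph x| = 1) /\
    (forall x, gmap V x = f x) /\ (forall x, gph V x = ph x) /\
    (forall y x, V y x = (y == f x)%:R * ph x).
Proof.
case=> f [ph [bf [nph HV]]].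
have ph0 x : ph x != 0 by apply/eqP=> h; move: (nph x); rewrite h normr0 => /eqP; rewrite eq_sym oner_eq0.
have gm x : gmap V x = f x.
  rewrite /gmap; case: pickP => [y|H] /=.
    move=> Hy; apply/eqP; apply: contraTT Hy => ne; by rewrite HV (negbTE ne) eqxx.
  by move: (H (f x)); rewrite HV eqxx (negbTE (ph0 x)).
exists f, ph; do 4 split => //.
  by move=> x; rewrite /gph gm HV eqxx.
by move=> y x; rewrite HV; case: eqP; rewrite ?mul1r ?mul0r.
Qed.

Lemma ac_form m (V : op C m) : almost_classical V ->
  forall y x, V y x = (y == gmap V x)%:R * gph V x.
Proof.
by case/ac_spec=> f [ph [_ [_ [gm [gp HV]]]]] y x; rewrite HV gm gp.
Qed.

Lemma ac_gmap_diag m (V : op C m) : almost_classical V -> diagonal V ->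
  forall x, gmap V x = x.
Proof.
case/ac_spec=> f [ph [_ [nph [gm [gp HV]]]]] Hd x; rewrite gm.
apply/eqP; apply: contraT => ne.
move: (Hd _ _ ne); rewrite HV eqxx mul1r => h.
by move: (nph x); rewrite h normr0 => /eqP; rewrite eq_sym oner_eq0.
Qed.

Lemma adj_ac m (V : op C m) : almost_classical V -> almost_classical (adj V).
Proof.
case/ac_spec=> f [ph [[g fg gf] [nph [gm [gp HV]]]]].
exists g, (fun x => (ph (g x))^*); split; first by exists f.
split; first by move=> x; rewrite normCK_norm ?nph // || rewrite norm_conjC.
move=> y x; rewrite /adj HV rmorphM /= conjC_nat.
have -> : (x == f y) = (y == g x).
  by apply/eqP/eqP=> [->|->]; rewrite ?fg ?gf.
by case: eqP => [->|]; rewrite ?mul1r ?mul0r.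
Qed.

Lemma adj_inv m (V : op C m) : almost_classical V ->
  forall r, gmap (adj V) (gmap V r) = r /\ gph (adj V) (gmap V r) * gph V r = 1.
Proof.
move=> HV r; have HA := adj_ac HV.
case/ac_spec: (HV) => f [ph [[g fg gf] [nph [gm [gp HVf]]]]].
have aVr : adj V r (f r) = (ph r)^* by rewrite /adj HVf eqxx mul1r.
have e1 : gmap (adj V) (gmap V r) = r.
  rewrite gm; move: (ac_form HA r (f r)); rewrite aVr.
  case: eqP => [<- //|_]; rewrite mul0r => /eqP; rewrite conjC_eq0 => /eqP h.
  by move: (nph r); rewrite h normr0 => /eqP; rewrite eq_sym oner_eq0.
split=> //.
rewrite {1}/gph e1 gm aVr gp mulrC -normCK nph expr1n //.
Qed.
End Gen.
Section Emb.
Variable C : numClosedFieldType.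
Variable n : nat.
Implicit Types (g : ginst C n) (x y : bits n).

Definition good g := uniq (g_qs g) /\ almost_classical ((@g_op _ _ g)).

Definition emap g x : bits n :=
  [ffun k => if [pick j | tnth (g_qs g) j == k] is Some j
             then gmap ((@g_op _ _ g)) (restrict (g_qs g) x) j else x k].
Definition gphase g x : C := gph ((@g_op _ _ g)) (restrict (g_qs g) x).

Lemma emap_out g x k : k \notin g_qs g -> emap g x k = x k.
Proof.
move=> Hk; rewrite ffunE; case: pickP => [j /eqP Hj|//].
by move: Hk; rewrite -Hj mem_tnth.
Qed.

Lemma emap_in g x j : uniq (g_qs g) ->
  emap g x (tnth (g_qs g) j) = gmap ((@g_op _ _ g)) (restrict (g_qs g) x) j.
Proof.
move=> U; rewrite ffunE; case: pickP => [j' /eqP Hj|H].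
  by move/tuple_uniqP: U => /(_ _ _ Hj) ->.
by move: (H j); rewrite eqxx.
Qed.

Lemma restrict_emap g x : uniq (g_qs g) ->
  restrict (g_qs g) (emap g x) = gmap ((@g_op _ _ g)) (restrict (g_qs g) x).
Proof. by move=> U; apply/ffunP=> j; rewrite ffunE emap_in. Qed.

Lemma embed_form g : good g -> forall y x,
  embed g y x = (y == emap g x)%:R * gphase g x.
Proof.
case=> U A y x; rewrite /embed ac_form //.
have -> : (y == emap g x) =
  [forall i, (i \notin g_qs g) ==> (y i == x i)] &&
  (restrict (g_qs g) y == gmap ((@g_op _ _ g)) (restrict (g_qs g) x)).
  apply/eqP/andP => [->|[/forallP F /eqP R]].
    split; first by apply/forallP=> i; apply/implyP=> Hi; rewrite emap_out.
    by rewrite restrict_emap.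
  apply/ffunP=> k; case: (boolP (k \in g_qs g)) => Hk.
    case/tnthP: Hk => j ->; rewrite emap_in // -R ffunE //.
  by rewrite emap_out //; apply/eqP; move/implyP: (F k); apply.
by case: ifP => _ //=; rewrite mul0r.
Qed.

Fixpoint cmap (W : seq (ginst C n)) x : bits n :=
  if W is g :: W' then cmap W' (emap g x) else x.
Fixpoint cph (W : seq (ginst C n)) x : C :=
  if W is g :: W' then cph W' (emap g x) * gphase g x else 1.

Lemma cmap_cat A B x : cmap (A ++ B) x = cmap B (cmap A x).
Proof. by elim: A x => //= g A IH x; rewrite IH. Qed.
Lemma cph_cat A B x : cph (A ++ B) x = cph B (cmap A x) * cph A x.
Proof. elim: A x => /= [|g A IH] x; first by rewrite mulr1. by rewrite IH mulrA. Qed.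

Lemma cmap1 h x : cmap [:: h] x = emap h x. Proof. by []. Qed.
Lemma cph1 h x : cph [:: h] x = gphase h x. Proof. by rewrite /= mul1r. Qed.

Lemma run_fwd (W : seq (ginst C n)) : (forall g, List.In g W -> good g) ->
  forall psi y, run W psi y = \sum_x (y == cmap W x)%:R * cph W x * psi x.
Proof.
elim: W => [|g W IH] HW psi y.
  rewrite /run /= (bigD1 y) //= eqxx mul1r mul1r big1 ?addr0 // => x /negbTE.
  by rewrite eq_sym => ->; rewrite !mul0r.
have -> : run (g :: W) psi = run W (apply_op (embed g) psi) by [].
rewrite IH; last by move=> h Hh; apply: HW; right.
rewrite /apply_op.
under eq_bigr => x' _ do rewrite big_distrr /=.
rewrite exchange_big /=; apply: eq_bigr => x _ /=.
rewrite (bigD1 (emap g x)) //= big1 ?addr0.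
  rewrite embed_form ?eqxx; last by apply: HW; left.
  by rewrite mul1r !mulrA.
move=> x' ne; rewrite embed_form; last by apply: HW; left.
by rewrite (negbTE ne) mul0r mul0r mulr0.
Qed.

Lemma cmap_frame (W : seq (ginst C n)) x k :
  (forall g, List.In g W -> k \notin g_qs g) -> cmap W x k = x k.
Proof.
elim: W x => //= g W IH x H.
by rewrite IH ?emap_out //; [apply: H; left | move=> h Hh; apply: H; right].
Qed.

Lemma emap_diag g x : good g -> diagonal ((@g_op _ _ g)) -> emap g x = x.
Proof.
case=> U A Hd; apply/ffunP=> k; case: (boolP (k \in g_qs g)) => Hk.
  by case/tnthP: Hk => j ->; rewrite emap_in // ac_gmap_diag // ffunE.
by rewrite emap_out.
Qed.

Definition ginv g := GInst (adj ((@g_op _ _ g))) (g_qs g).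

Lemma good_ginv g : good g -> good (ginv g).
Proof. by case=> U A; split => //=; apply: adj_ac. Qed.

Lemma ginv_spec g x : good g ->
  emap (ginv g) (emap g x) = x /\ gphase (ginv g) (emap g x) * gphase g x = 1.
Proof.
case=> U A; have [e1 e2] := adj_inv A (restrict (g_qs g) x).
split.
  apply/ffunP=> k; case: (boolP (k \in g_qs g)) => Hk.
    case/tnthP: Hk => j ->.
    by rewrite (emap_in (g:=ginv g)) //= restrict_emap // e1 ffunE.
  by rewrite !emap_out.
by rewrite /gphase /= restrict_emap.
Qed.

Lemma ginv_list (W : seq (ginst C n)) x : (forall g, List.In g W -> good g) ->
  cmap (rev (map ginv W)) (cmap W x) = x /\
  cph (rev (map ginv W)) (cmap W x) * cph W x = 1.
Proof.
elim: W x => [|g W IH] x HW /=; first by rewrite mulr1.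
have Hg : good g by apply: HW; left.
have [e1 e2] := ginv_spec x Hg.
have [i1 i2] := IH (emap g x) (fun h Hh => HW h (or_intror Hh)).
rewrite rev_cons -cats1 cmap_cat cph_cat cmap1 cph1 i1 e1; split => //.
set a1 := gphase (ginv g) _; set a2 := cph _ _; set a3 := cph W _.
by rewrite [a1 * a2]mulrC mulrACA i2 e2 mul1r.
Qed.
End Emb.
Section Dpow.
Variable C : numClosedFieldType.
Variable mD : nat.
Variable D : op C mD.
Hypothesis HDd : diagonal D.

Lemma diag_opmul m (A B : op C m) : diagonal A -> diagonal B ->
  diagonal (opmul A B) /\ forall y, opmul A B y y = A y y * B y y.
Proof.
move=> dA dB; split.
  move=> y x ne; rewrite /opmul big1 // => z _.
  case: (eqVneq y z) => [<-|nz]; first by rewrite (dB _ _ ne) mulr0.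
  by rewrite (dA _ _ nz) mul0r.
move=> y; rewrite /opmul (bigD1 y) //= big1 ?addr0 // => z nz.
by rewrite (dA y z) ?mul0r // eq_sym.
Qed.

Lemma diag_opid m : diagonal (@opid C m).
Proof. by move=> y x ne; rewrite /opid (negbTE ne). Qed.

Lemma diag_adj m (A : op C m) : diagonal A -> diagonal (adj A).
Proof. by move=> dA y x ne; rewrite /adj dA ?conjC0 // eq_sym. Qed.

Lemma diag_pow m (A : op C m) j : diagonal A ->
  diagonal (oppow A j) /\ forall y, oppow A j y y = (A y y) ^+ j.
Proof.
move=> dA; elim: j => [|j [dj ej]].
  by split; [apply: diag_opid | move=> y; rewrite /oppow /= /opid eqxx expr0].
have [d1 e1] := diag_opmul dA dj.
have -> : oppow A j.+1 = opmul A (oppow A j) by [].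
by split => // y; rewrite e1 ej exprS.
Qed.

Lemma diag_powz k : diagonal (oppowz D k).
Proof.
case: k => j /=; first by case: (diag_pow j HDd).
by case: (diag_pow j.+1 (diag_adj HDd)).
Qed.

Lemma Dpow_diag m (V : op C m) (e : mD = m) k :
  op_eq V (eq_rect mD (op C) (oppowz D k) m e) -> diagonal V.
Proof.
case: m / e V => V /= H y x ne; rewrite H; exact: diag_powz.
Qed.

Lemma adj_Dpow m (V : op C m) (e : mD = m) k :
  op_eq (adj V) (eq_rect mD (op C) (oppowz D k) m e) ->
  exists k', op_eq V (eq_rect mD (op C) (oppowz D k') m e).
Proof.
case: m / e V => V /= H.
have HV y x : V y x = (oppowz D k x y)^* by rewrite -H /adj conjCK.
have dV : diagonal V by move=> y x ne; rewrite HV diag_powz ?conjC0 // eq_sym.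
have dA := diag_adj HDd.
case: k H HV => j H HV.
- case: j H HV => [|j] H HV.
    exists 0%:Z => y x; case: (eqVneq y x) => [->|ne]; last by rewrite dV // diag_powz.
    by rewrite HV /= /oppow /= /opid eqxx conjC1.
  exists (Negz j) => y x; case: (eqVneq y x) => [->|ne]; last by rewrite dV // diag_powz.
  rewrite HV -[oppowz D (Posz j.+1)]/(oppow D j.+1) -[oppowz D (Negz j)]/(oppow (adj D) j.+1).
  by rewrite (diag_pow j.+1 HDd).2 (diag_pow j.+1 dA).2 rmorphXn.
- exists (Posz j.+1) => y x; case: (eqVneq y x) => [->|ne]; last by rewrite dV // diag_powz.
  rewrite HV -[oppowz D (Posz j.+1)]/(oppow D j.+1) -[oppowz D (Negz j)]/(oppow (adj D) j.+1).
  by rewrite (diag_pow j.+1 HDd).2 (diag_pow j.+1 dA).2 rmorphXn /adj /= conjCK.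
Qed.
End Dpow.
Lemma cnot_inv (x : bits 2) : cnot_map (cnot_map x) = x.
Proof.
apply/ffunP=> i; rewrite /cnot_map !ffunE /=.
case: (eqVneq (val i) 0%N) => [Hi|Hi].
  by congr (x _); apply: val_inj; rewrite Hi.
have -> : i = ord_max by apply: val_inj; case: i Hi => [[|[|]]] //=.
by rewrite /=; case: (x ord0); case: (x ord_max).
Qed.

Lemma ac_CNOT (C : numClosedFieldType) : almost_classical (CNOT C).
Proof.
exists cnot_map, (fun _ => 1); split; first by exists cnot_map; apply: cnot_inv.
split; first by move=> _; rewrite normr1.
by move=> y x; rewrite /CNOT; case: eqP.
Qed.

Lemma CNOT_not_diag (C : numClosedFieldType) : ~ diagonal (CNOT C).
Proof.
move=> H; pose x : bits 2 := [ffun _ => true].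
have ne : cnot_map x != x.
  by apply/eqP => /ffunP /(_ ord_max); rewrite /cnot_map !ffunE.
by move: (H _ _ ne); rewrite /CNOT eqxx => /eqP; rewrite oner_eq0.
Qed.

Section Constr.
Variable C : numClosedFieldType.
Variables n N : nat.
Variable dD : ginst C n -> bool.
Local Notation NA := (n + N * n)%N.

Definition lift (g : ginst C n) : ginst C NA :=
  @GInst C NA (g_ar g) (@g_op _ _ g) (map_tuple (@lshift n (N * n)) (g_qs g)).
Definition anc (t : nat) (i : 'I_n) : 'I_NA := insubd (lshift (N * n) i) (n + t * n + i)%N.
Definition copy t i : ginst C NA := @GInst C NA 2 (CNOT C) [tuple lshift (N * n) i; anc t i].
Definition copyblk t := [seq copy t i | i <- enum 'I_n].
Definition Dg t (g : ginst C n) : ginst C NA :=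
  @GInst C NA (g_ar g) (@g_op _ _ g) (map_tuple (anc t) (g_qs g)).
Fixpoint fw1 t c := if c is g :: c' then (if dD g then copyblk t else [:: lift g]) ++ fw1 t.+1 c' else [::].
Fixpoint Lg t c := if c is g :: c' then (if dD g then [:: Dg t g] else [::]) ++ Lg t.+1 c' else [::].
Definition fw0 (c : seq (ginst C n)) := [seq lift g | g <- c & ~~ dD g].
Definition data (x : bits NA) : bits n := [ffun i => x (lshift _ i)].
Definition z0 (d : bits n) : bits NA := [ffun k => if split k is inl i then d i else false].
Fixpoint Dph c (d : bits n) : C :=
  if c is g :: c' then (if dD g then gphase g d else 1) * Dph c' (emap g d) else 1.

Lemma anc_val t i : (t < N)%N -> val (anc t i) = (n + t * n + i)%N.
Proof.
move=> Ht; rewrite val_insubd; case: ifP => // /negbT; rewrite -leqNgt => H.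
exfalso; move: H; rewrite -addnA leq_add2l => H.
have : (t * n + i < N * n)%N.
  apply: (@leq_trans (t.+1 * n)); first by rewrite mulSn; have := ltn_ord i; lia.
  by rewrite leq_mul2r Ht orbT.
by rewrite ltnNge H.
Qed.

Lemma anc_inj t s i j : (t < N)%N -> (s < N)%N -> anc t i = anc s j -> t = s /\ i = j.
Proof.
move=> Ht Hs /(congr1 val); rewrite !anc_val // -!addnA => /addnI E.
have key : forall t s (i j : 'I_n), (t < s)%N -> (t * n + i)%N != (s * n + j)%N.
  move=> t' s' i' j' lt; apply/eqP => E'.
  have : (t' * n + i' < s' * n + j')%N.
    apply: (@leq_trans (t'.+1 * n)); first by rewrite mulSn; have := ltn_ord i'; lia.
    apply: leq_trans (leq_addr _ _); by rewrite leq_mul2r lt orbT.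
  by rewrite E' ltnn.
case: (ltngtP t s) => [lt|lt|eq].
- by move: (key _ _ i j lt); rewrite E eqxx.
- by move: (key _ _ j i lt); rewrite E eqxx.
- by subst; split => //; apply: val_inj; move/addnI: E.
Qed.

Lemma anc_lshift t i j : (t < N)%N -> anc t i != lshift _ j.
Proof.
move=> Ht; apply/eqP => /(congr1 val); rewrite anc_val //= => E.
by move: (ltn_ord j); rewrite -E -addnA ltnNge leq_addr.
Qed.

Lemma split_l (i : 'I_n) : split (lshift (N * n) i) = inl i.
Proof. exact: (unsplitK (inl i)). Qed.

Lemma data_z0 d : data (z0 d) = d.
Proof. by apply/ffunP => i; rewrite !ffunE split_l. Qed.

Lemma z0_anc d t i : (t < N)%N -> z0 d (anc t i) = false.
Proof.
move=> Ht; rewrite ffunE; case: splitP => // j Hj.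
by move: (ltn_ord j); rewrite -Hj anc_val // -addnA ltnNge leq_addr.
Qed.

Lemma restrict_lift (g : ginst C n) x : restrict (g_qs (lift g)) x = restrict (g_qs g) (data x).
Proof. by apply/ffunP => j; rewrite /data !ffunE tnth_map. Qed.

Lemma good_lift g : good g -> good (lift g).
Proof. by case=> U A; split => //=; rewrite map_inj_uniq //; apply: lshift_inj. Qed.

Lemma lift_notin g k : (forall i, k != lshift _ i) -> k \notin g_qs (lift g).
Proof. by move=> H; apply/negP => /mapP [i _ E]; move: (H i); rewrite E eqxx. Qed.

Lemma data_emap_lift g x : good g -> data (emap (lift g) x) = emap g (data x).
Proof.
move=> Hg; have [U A] := Hg; have [U' _] := good_lift Hg.
apply/ffunP => i; rewrite ffunE.
case: (boolP (i \in g_qs g)) => Hi.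
  case/tnthP: Hi => j ->.
  have -> : lshift (N * n) (tnth (g_qs g) j) = tnth (g_qs (lift g)) j by rewrite tnth_map.
  by rewrite emap_in // emap_in // restrict_lift.
rewrite !emap_out ?ffunE //.
by apply/negP => /mapP [i' Hi' /lshift_inj E]; move: Hi; rewrite E Hi'.
Qed.

Lemma gphase_lift g x : gphase (lift g) x = gphase g (data x).
Proof. by rewrite /gphase restrict_lift. Qed.

Lemma good_copy t i : (t < N)%N -> good (copy t i).
Proof.
move=> Ht; split; last exact: ac_CNOT.
by rewrite /= andbT inE eq_sym anc_lshift.
Qed.

Lemma emap_copy t i x k : (t < N)%N ->
  emap (copy t i) x k = if k == anc t i then xorb (x (lshift _ i)) (x k) else x k.
Proof.
move=> Ht; have [U A] := good_copy i Ht.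
have gm : forall r, gmap (CNOT C) r = cnot_map r.
  move=> r; case/ac_spec: (ac_CNOT C) => f [ph [_ [_ [gm [_ HV]]]]].
  rewrite gm; move: (HV (cnot_map r) r); rewrite /CNOT eqxx.
  by case: eqP => [->//|_]; rewrite mul0r => /eqP; rewrite oner_eq0.
case: (eqVneq k (anc t i)) => [->|nk].
  have -> : anc t i = tnth (g_qs (copy t i)) ord_max by [].
  by rewrite emap_in //= gm !ffunE.
case: (eqVneq k (lshift _ i)) => [->|nl].
  have -> : lshift (N * n) i = tnth (g_qs (copy t i)) ord0 by [].
  by rewrite emap_in //= gm !ffunE.
by rewrite emap_out // !inE negb_or nk nl.
Qed.

Lemma CNOT_gmap r : gmap (CNOT C) r = cnot_map r.
Proof.
case/ac_spec: (ac_CNOT C) => f [ph [_ [_ [gm [_ HV]]]]].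
rewrite gm; move: (HV (cnot_map r) r); rewrite /CNOT eqxx.
by case: eqP => [->//|_]; rewrite mul0r => /eqP; rewrite oner_eq0.
Qed.

Lemma gphase_copy t i x : gphase (copy t i) x = 1.
Proof.
rewrite /gphase; set r := restrict _ x; rewrite /gph /= CNOT_gmap.
by rewrite /CNOT (eqxx (cnot_map r)).
Qed.

Lemma cph_cons (h : ginst C NA) W x : cph (h :: W) x = cph W (emap h x) * gphase h x.
Proof. by []. Qed.

Lemma cbr_out t (r : seq 'I_n) k x : (t < N)%N -> (forall i, k != anc t i) ->
  cmap [seq copy t i | i <- r] x k = x k.
Proof.
move=> Ht H; elim: r x => //= j r IH x.
by rewrite IH emap_copy // (negbTE (H j)).
Qed.

Lemma cbr_in t (r : seq 'I_n) i x : (t < N)%N -> uniq r ->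
  cmap [seq copy t i | i <- r] x (anc t i) =
  if i \in r then xorb (x (lshift _ i)) (x (anc t i)) else x (anc t i).
Proof.
move=> Ht; elim: r x => //= j r IH x /andP [jr U].
have nl : (lshift (N * n) i == anc t j) = false by rewrite eq_sym (negbTE (anc_lshift _ _ Ht)).
rewrite IH // !emap_copy // inE nl.
case: (eqVneq i j) => [Eij|ne].
  by subst j; rewrite (negbTE jr) eqxx.
have -> : (anc t i == anc t j) = false.
  by apply/negbTE/eqP => /(anc_inj Ht Ht) [_ E]; move: ne; rewrite E eqxx.
by [].
Qed.

Lemma cb_out t k x : (t < N)%N -> (forall i, k != anc t i) -> cmap (copyblk t) x k = x k.
Proof. exact: cbr_out. Qed.

Lemma cb_in t i x : (t < N)%N ->
  cmap (copyblk t) x (anc t i) = xorb (x (lshift _ i)) (x (anc t i)).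
Proof. by move=> Ht; rewrite /copyblk cbr_in ?enum_uniq // mem_enum. Qed.

Lemma cph_cb t x : cph (copyblk t) x = 1.
Proof.
rewrite /copyblk; elim: (enum 'I_n) x => [//|j r IH] x.
by rewrite map_cons cph_cons IH gphase_copy mulr1.
Qed.

Lemma In_map_copy t r h : List.In h [seq copy t i | i <- r] -> exists i, h = copy t i.
Proof.
elim: r => //= j r IH [<-|/IH //]; by exists j.
Qed.

Lemma fw1_qs c t h : List.In h (fw1 t c) -> forall k, k \in g_qs h ->
  (exists i, k = lshift _ i) \/ (exists s i, (t <= s < t + size c)%N /\ k = anc s i).
Proof.
elim: c t => //= g c IH t /List.in_app_iff [H|H] k Hk.
- case: (dD g) H.
    case/In_map_copy => i E; subst h; move: Hk; rewrite !inE => /orP [/eqP ->|/eqP ->].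
      by left; exists i.
    by right; exists t, i; rewrite leqnn addnS ltnS leq_addr.
  case=> // E; subst h; left; case/mapP: Hk => i _ ->; by exists i.
- case: (IH _ H k Hk) => [L|[s [i [Hs E]]]]; [by left | right; exists s, i].
  by split => //; move: Hs; rewrite addSnnS; case/andP => /ltnW -> ->.
Qed.

Lemma Lg_qs c t h : List.In h (Lg t c) -> forall k, k \in g_qs h ->
  exists s i, (t <= s < t + size c)%N /\ k = anc s i.
Proof.
elim: c t => //= g c IH t /List.in_app_iff [H|H] k Hk.
- case: (dD g) H => //= [[E|//]]; subst h.
  case/mapP: Hk => i _ ->; exists t, i; by rewrite leqnn addnS ltnS leq_addr.
- case: (IH _ H k Hk) => [s [i [Hs E]]]; exists s, i.
  by split => //; move: Hs; rewrite addSnnS; case/andP => /ltnW -> ->.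
Qed.

Definition blk t (z : bits NA) : bits n := [ffun i => z (anc t i)].

Lemma good_Dg t g : (t < N)%N -> good g -> good (Dg t g).
Proof.
move=> Ht [U A]; split => //=; rewrite map_inj_uniq // => i j E.
exact: (anc_inj Ht Ht E).2.
Qed.

Lemma gphase_Dg t g z : gphase (Dg t g) z = gphase g (blk t z).
Proof. by rewrite /gphase; congr gph; apply/ffunP => j; rewrite !ffunE tnth_map. Qed.

Lemma Q c : forall t (x : bits NA), (t + size c <= N)%N ->
  (forall g, List.In g c -> good g) ->
  (forall g, List.In g c -> dD g -> diagonal (@g_op _ _ g)) ->
  (forall s i, (t <= s)%N -> (s < N)%N -> x (anc s i) = false) ->
  cph (Lg t c) (cmap (fw1 t c) x) = Dph c (data x).
Proof.
elim: c => [|g c IH] t x Hsz Hg Hd H0 //=.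
have Ht : (t < N)%N by move: Hsz; rewrite addnS; apply: leq_trans; rewrite ltnS leq_addr.
have Hsz' : (t.+1 + size c <= N)%N by rewrite addSnnS.
have Hg1 : good g by apply: Hg; left.
have Hg' : forall h, List.In h c -> good h by move=> h Hh; apply: Hg; right.
have Hd' : forall h, List.In h c -> dD h -> diagonal (@g_op _ _ h) by move=> h Hh; apply: Hd; right.
rewrite cmap_cat cph_cat.
case E: (dD g).
  have dg := Hd g (or_introl erefl) E.
  set y := cmap (copyblk t) x.
  have Hy0 : forall s i, (t.+1 <= s)%N -> (s < N)%N -> y (anc s i) = false.
    move=> s i Hs HsN; rewrite /y cb_out //; first by apply: H0 => //; apply: ltnW.
    by move=> j; apply/eqP => /(anc_inj HsN Ht) [Est _]; move: Hs; rewrite Est ltnn.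
  have dy : data y = data x.
    apply/ffunP => i; rewrite !ffunE /y cb_out // => j; rewrite eq_sym; exact: anc_lshift.
  have gD : good (Dg t g) by apply: good_Dg.
  rewrite cmap1 (emap_diag _ gD dg) cph1.
  rewrite IH // dy emap_diag // gphase_Dg mulrC; congr (_ * _); congr gphase.
  apply/ffunP => i; rewrite /blk /data !ffunE cmap_frame.
    by rewrite /y cb_in // H0 //; case: (x _).
  move=> h Hh; apply/negP => /(fw1_qs Hh) [[j /eqP]|[s [j [/andP [Hs1 Hs2] /(anc_inj Ht _) []]]]].
    by rewrite (negbTE (anc_lshift _ _ Ht)).
    by apply: leq_trans Hs2 _.
  by move=> Est; move: Hs1; rewrite Est ltnn.
rewrite /= mul1r.
set y := emap (lift g) x.
have Hy0 : forall s i, (t.+1 <= s)%N -> (s < N)%N -> y (anc s i) = false.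
  move=> s i Hs HsN; rewrite /y emap_out; first by apply: H0 => //; apply: ltnW.
  by apply: lift_notin => j; apply: anc_lshift.
by rewrite IH // /y data_emap_lift // mulr1.
Qed.

Lemma all_In T (p : pred T) (s : seq T) : (forall x, List.In x s -> p x) -> all p s.
Proof. elim: s => //= x s IH H; rewrite H ?IH //; [by move=> y Hy; apply: H; right | by left]. Qed.

Lemma emap_lift_z0 g d : good g -> emap (lift g) (z0 d) = z0 (emap g d).
Proof.
move=> Hg; apply/ffunP => k; case: (splitP k) => [j Hj|j Hj].
  have -> : k = lshift _ j by apply: val_inj.
  have := congr1 (fun f : bits n => f j) (data_emap_lift (z0 d) Hg).
  by rewrite data_z0 /data ffunE => ->; rewrite /z0 [in RHS]ffunE split_l.
have Hk : forall i, k != lshift _ i.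
  move=> i; apply/eqP => E; move: Hj; rewrite E /= => Hj.
  by move: (ltn_ord i); rewrite Hj ltnNge leq_addr.
rewrite emap_out; last exact: lift_notin.
rewrite /z0 !ffunE; case: splitP => // i Hi.
by move: (Hk i); rewrite (_ : k = lshift _ i) ?eqxx //; apply: val_inj.
Qed.

Lemma lift_list W d : (forall g, List.In g W -> good g) ->
  cmap (map lift W) (z0 d) = z0 (cmap W d) /\ cph (map lift W) (z0 d) = cph W d.
Proof.
elim: W d => [|g W IH] d HW; first by [].
have Hg : good g by apply: HW; left.
rewrite map_cons cph_cons [cmap (_ :: _) _]/= [cmap (g :: _) _]/= [cph (g :: _) _]/= emap_lift_z0 //; have [-> ->] := IH (emap g d) (fun h Hh => HW h (or_intror Hh)).
by rewrite gphase_lift data_z0.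
Qed.

Lemma cmap_id (W : seq (ginst C NA)) x : (forall h, List.In h W -> forall y, emap h y = y) ->
  cmap W x = x.
Proof.
elim: W x => //= h W IH x H; rewrite H; last by left.
by apply: IH => h' Hh'; apply: H; right.
Qed.

Lemma Dph_split c d : (forall g, List.In g c -> good g) ->
  (forall g, List.In g c -> dD g -> diagonal (@g_op _ _ g)) ->
  cmap c d = cmap [seq g <- c | ~~ dD g] d /\
  cph c d = Dph c d * cph [seq g <- c | ~~ dD g] d.
Proof.
elim: c d => [|g c IH] d Hg Hd /=; first by rewrite mulr1.
have Hg1 : good g by apply: Hg; left.
have [IH1 IH2] := IH (emap g d) (fun h Hh => Hg h (or_intror Hh)) (fun h Hh => Hd h (or_intror Hh)).
case E: (dD g) => /=.
  have e : emap g d = d by apply: emap_diag => //; apply: Hd => //; left.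
  by rewrite IH1 IH2 e mulrC mulrA.
by rewrite IH1 IH2 mul1r mulrA.
Qed.

Lemma fw1_class c t h : List.In h (fw1 t c) ->
  (exists g, List.In g c /\ dD g = false /\ h = lift g) \/
  (exists s i, (t <= s < t + size c)%N /\ h = copy s i).
Proof.
elim: c t => //= g c IH t /List.in_app_iff [H|H].
- case E: (dD g) H.
    case/In_map_copy => i ->; right; exists t, i; by rewrite leqnn addnS ltnS leq_addr.
  case=> // <-; left; exists g; split; [by left | by []].
- case: (IH _ H) => [[g' [H1 H2]]|[s [i [Hs E]]]].
    by left; exists g'; split => //; right.
  right; exists s, i; split => //; move: Hs; rewrite addSnnS; by case/andP => /ltnW -> ->.
Qed.

Lemma Lg_class c t h : List.In h (Lg t c) ->
  exists g s, List.In g c /\ dD g /\ (t <= s < t + size c)%N /\ h = Dg s g.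
Proof.
elim: c t => //= g c IH t /List.in_app_iff [H|H].
- case E: (dD g) H => /= H; last by [].
  case: H => [<-|//].
  exists g, t; split; [by left|split => //]; by rewrite leqnn addnS ltnS leq_addr.
- case: (IH _ H) => [g' [s [H1 [H2 [Hs E]]]]]; exists g', s; split; first by right.
  split => //; split => //; move: Hs; rewrite addSnnS; by case/andP => /ltnW -> ->.
Qed.

Lemma layer_Lg c t : (t + size c <= N)%N -> layer (Lg t c).
Proof.
elim: c t => [|g c IH] t Hsz //=.
have Ht : (t < N)%N by move: Hsz; rewrite addnS; apply: leq_trans; rewrite ltnS leq_addr.
have Hsz' : (t.+1 + size c <= N)%N by rewrite addSnnS.
have IH' := IH _ Hsz'; rewrite /layer in IH' *; rewrite pairwise_cat IH' andbT.
case: (dD g) => //=; rewrite andbT /allrel /= andbT.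
apply: all_In => h /(Lg_qs) Hq; apply/allP => k /mapP [i _ ->].
apply/negP => /Hq [s [j [/andP [Hs1 Hs2] /(anc_inj Ht _) []]]].
  by apply: leq_trans Hs2 _.
by move=> Est; move: Hs1; rewrite Est ltnn.
Qed.

Definition Az (x : bits NA) := [forall j : 'I_(N * n), ~~ x (rshift n j)].

Lemma split_r (j : 'I_(N * n)) : split (rshift n j) = inr j.
Proof. exact: (unsplitK (inr j)). Qed.

Lemma z0_data x : Az x -> z0 (data x) = x.
Proof.
move/forallP => H; apply/ffunP => k; rewrite /z0 ffunE.
case: splitP => j Hj.
  by rewrite /data ffunE; congr (x _); apply: val_inj.
have -> : k = rshift n j by apply: val_inj.
by move: (H j); case: (x _).
Qed.

Lemma Az_z0 d : Az (z0 d).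
Proof. by apply/forallP => j; rewrite /z0 ffunE split_r. Qed.

Lemma z0_eq z e : (z == z0 e) = Az z && (data z == e).
Proof.
apply/eqP/andP => [->|[A /eqP <-]]; last by rewrite z0_data.
by rewrite Az_z0 data_z0.
Qed.

Lemma sum_ext (F : bits NA -> C) (psi : state C n) :
  \sum_x F x * ext (a:=N * n) psi x = \sum_d F (z0 d) * psi d.
Proof.
rewrite (eq_bigr (fun x => if Az x then F x * psi (data x) else 0)); last first.
  by move=> x _; rewrite /ext -/(Az x); case: ifP => _; rewrite ?mulr0.
rewrite -big_mkcond (reindex_onto z0 data); last by move=> x; apply: z0_data.
apply: eq_big => [d|d _]; first by rewrite Az_z0 data_z0 eqxx.
by rewrite data_z0.
Qed.
End Constr.

Lemma In_rev T (h : T) s : List.In h (rev s) -> List.In h s.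
Proof.
elim: s => //= x s IH; rewrite rev_cons -cats1 => /List.in_app_iff [/IH H|[<-|//]].
  by right. by left.
Qed.

Lemma In_map T U (f : T -> U) h s : List.In h (map f s) -> exists x, List.In x s /\ h = f x.
Proof. elim: s => //= x s IH [<-|/IH [y [Hy ->]]]; [by exists x; split; [left|] | by exists y; split; [right|]]. Qed.

Lemma In_filter T (p : pred T) h s : List.In h (filter p s) -> List.In h s /\ p h.
Proof.
elim: s => //= x s IH; case: ifP => px /=.
  by case=> [<-|/IH [H1 H2]]; split => //; [left|right].
by move=> /IH [H1 H2]; split => //; right.
Qed.

Theorem lemma2 (C : numClosedFieldType)
  (S : forall m : nat, op C m -> Prop) (mD : nat) (D : op C mD)
  (HS : forall m (V : op C m), S m V -> almost_classical V)
  (HCNOT : S 2%N (CNOT C)) (HD : S mD D) (HDdiag : diagonal D)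
  (n : nat) (c : seq (ginst C n))
  (Hwf : wf_circuit c) (HcS : all_gates (@in_gateset C S n) c) :
  exists (a : nat) (w1 L w2 : seq (ginst C (n + a))),
    wf_circuit (w1 ++ L ++ w2) /\
    all_gates (@allowed C S mD D (n + a)) (w1 ++ L ++ w2) /\
    all_gates (fun g => ~ @is_Dpow C mD D (n + a) g) w1 /\
    all_gates (fun g => ~ @is_Dpow C mD D (n + a) g) w2 /\
    all_gates (@is_Dpow C mD D (n + a)) L /\ layer L /\
    (forall (psi : state C n) (z : bits (n + a)),
        run (w1 ++ L ++ w2) (@ext C n a psi) z = @ext C n a (run c psi) z).
Proof.
pose dD := fun g : ginst C n => if excluded_middle_informative (@is_Dpow C mD D n g) then true else false.
have dDP : forall g, dD g <-> @is_Dpow C mD D n g.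
  by move=> g; rewrite /dD; case: excluded_middle_informative.
set N := size c.
have Hgc : forall g, List.In g c -> good g.
  by move=> g Hg; split; [apply: Hwf | apply: HS; apply: HcS].
have Hdc : forall g, List.In g c -> dD g -> diagonal (@g_op _ _ g).
  by move=> g _ /(dDP g) [e [k H]]; apply: (Dpow_diag HDdiag H).
pose w1 := @fw1 C n N dD 0 c.
pose L := @Lg C n N dD 0 c.
pose bw := rev (map (@ginv C (n + N * n)) w1).
pose f0 := @fw0 C n N dD c.
have P1 : forall h, List.In h w1 ->
    good h /\ @in_gateset C S _ h /\ ~ @is_Dpow C mD D _ h.
  move=> h /fw1_class [[g [Hg [Eg ->]]]|[s [i [/andP [_ Hs] ->]]]].
    split; first by apply: good_lift; apply: Hgc.
    split; first by apply: HcS.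
    move=> [e [k H]]; suff : dD g by rewrite Eg.
    by apply/(dDP g); exists e, k.
  split; first by apply: good_copy.
  split; first exact: HCNOT.
  move=> [e [k H]]; apply: (@CNOT_not_diag C); exact: (Dpow_diag HDdiag H).
have P0 : forall h, List.In h f0 ->
    good h /\ @in_gateset C S _ h /\ ~ @is_Dpow C mD D _ h.
  move=> h Hh; case: (In_map Hh) => g [Hg' ->]; case: (In_filter Hg') => Hg Eg.
  split; first by apply: good_lift; apply: Hgc.
  split; first by apply: HcS.
  move=> [e [k H]]; suff : dD g by move=> E; rewrite E in Eg.
  by apply/(dDP g); exists e, k.
have Pb : forall h, List.In h bw ->
    good h /\ @allowed C S mD D _ h /\ ~ @is_Dpow C mD D _ h.
  move=> h Hh; case: (In_map (In_rev Hh)) => h0 [H0 ->]; have [G0 [I0 N0]] := P1 h0 H0.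
  split; first by apply: good_ginv.
  split; first by right; left; exists (@g_op _ _ h0).
  move=> [e [k H]]; case: (adj_Dpow HDdiag H) => k' H'; apply: N0; by exists e, k'.
have PL : forall h, List.In h L ->
    good h /\ @in_gateset C S _ h /\ @is_Dpow C mD D _ h /\ diagonal (@g_op _ _ h).
  move=> h /Lg_class [g [s [Hg [Eg [/andP [_ Hs] ->]]]]].
  split; first by apply: good_Dg => //; apply: Hgc.
  split; first by apply: HcS.
  split; first by apply/(dDP g).
  exact: Hdc.
have Hall : forall h, List.In h (w1 ++ L ++ bw ++ f0) -> good h /\ @allowed C S mD D _ h.
  move=> h /List.in_app_iff [/P1 [G [I _]]|/List.in_app_iff [/PL [G [I _]]|/List.in_app_iff [/Pb [G [A _]]|/P0 [G [I _]]]]];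
    by split => //; left.
exists (N * n)%N, w1, L, (bw ++ f0).
split; first by move=> h /Hall [[U _] _].
split; first by move=> h /Hall [_ A].
split; first by move=> h /P1 [_ [_ H]].
split; first by move=> h /List.in_app_iff [/Pb [_ [_ H]]|/P0 [_ [_ H]]].
split; first by move=> h /PL [_ [_ [H _]]].
split; first exact: layer_Lg.
have key : forall d, cmap (w1 ++ L ++ bw ++ f0) (z0 N d) = z0 N (cmap c d) /\
                     cph (w1 ++ L ++ bw ++ f0) (z0 N d) = cph c d.
  move=> d; set x := z0 N d; set y := cmap w1 x.
  have eL : cmap L y = y.
    apply: cmap_id => h Hh z; have [G [_ [_ Dg]]] := PL h Hh; exact: emap_diag.
  have [ib1 ib2] := ginv_list x (fun h Hh => (P1 h Hh).1).
  have Hf0 : forall g, List.In g [seq g <- c | ~~ dD g] -> good g.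
    by move=> g Hg'; case: (In_filter Hg') => Hg _; apply: Hgc.
  have [l1 l2] := lift_list N d Hf0.
  have [s1 s2] := Dph_split d Hgc Hdc.
  have HQ := Q (t:=0) (x:=x) (leqnn _) Hgc Hdc (fun s i _ Hs => z0_anc d i Hs).
  rewrite !cmap_cat !cph_cat eL -/y ib1 l1 -s1; split => //.
  rewrite l2 -/x -/y HQ data_z0 s2.
  set p1 := cph bw y; set p2 := cph w1 x; set A := cph _ d; set Dp := Dph _ _ _.
  by rewrite -mulrA [Dp * p2]mulrC mulrA -(mulrA A p1 p2) ib2 mulr1 mulrC.
move=> psi z.
rewrite run_fwd; last by move=> h /Hall [G _].
rewrite sum_ext /ext run_fwd //.
case: ifP => HA.
  apply: eq_bigr => d _; have [k1 k2] := key d.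
  by rewrite k1 k2 z0_eq (_ : Az z = true).
apply: big1 => d _; have [k1 k2] := key d.
by rewrite k1 z0_eq (_ : Az z = false) // !mul0r.
Qed.
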